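(* Let $d\ge 1$ and $\delta>0$, and let $\mathcal{W}$ and $\mathcal{N}$ be the sets of trees defined in the context. Then $\mathcal{W}$ and $\mathcal{N}$ are both finite sets.
   Context: Trees are formal symbols. The set $\widehat{\mathcal{T}}_r$ is the smallest set containing the generators $\mathbf{1},\mathbf{X}_1,\dots,\mathbf{X}_d,\Xi$ and such that whenever $\tau_1,\tau_2,\tau_3\in\widehat{\mathcal{T}}_r$, the formal expression $\mathcal{I}(\tau_1)\mathcal{I}(\tau_2)\mathcal{I}(\tau_3)$ (a non-commutative ''tree product'' of the three ''planted trees'' $\mathcal{I}(\tau_k)$; different orderings of the factors give different trees) belongs to $\widehat{\mathcal{T}}_r$. The order $|\cdot|$ of a tree is defined recursively by $|\mathbf{1}|=-2$, $|\mathbf{X}_i|=-1$ for $1\le i\le d$, $|\Xi|=-3+\delta$, $|\mathcal{I}(\tau_1)\mathcal{I}(\tau_2)\mathcal{I}(\tau_3)|=6+|\tau_1|+|\tau_2|+|\tau_3|$ (and $|\mathcal{I}(\tau)|=|\tau|+2$ for planted trees). Define $\mathcal{W}=\{\tau\in\widehat{\mathcal{T}}_r:\ |\tau|<-2\}$ and $\mathcal{N}=\{\tau\in\widehat{\mathcal{T}}_r:\ -2\le|\tau|\le 0\}$. *)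

(* Defs.v *)
From Stdlib Require Fin.
From Stdlib Require Import Reals Ensembles Finite_sets.
Open Scope R_scope.

(* Trees of \hat T_r, with d noise-free coordinate symbols X_1..X_d
   (indexed by Fin.t d, i.e. i = 1..d). *)
Inductive tree (d : nat) : Type :=
| One : tree d
| X : Fin.t d -> tree d
| Xi : tree d
| Node : tree d -> tree d -> tree d -> tree d.
(* Node t1 t2 t3 represents the ordered product I(t1) I(t2) I(t3). *)

Arguments One {d}. Arguments X {d} _. Arguments Xi {d}. Arguments Node {d} _ _ _.

Fixpoint order {d : nat} (delta : R) (t : tree d) : R :=
  match t with
  | One => -2
  | X _ => -1
  | Xi => -3 + delta
  | Node t1 t2 t3 => 6 + order delta t1 + order delta t2 + order delta t3
  end.

Definition W (d : nat) (delta : R) : Ensemble (tree d) :=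
  fun t => order delta t < -2.

Definition Nset (d : nat) (delta : R) : Ensemble (tree d) :=
  fun t => -2 <= order delta t <= 0.

(* Main.v *)
Require Import Defs.
From Stdlib Require Fin.
From Stdlib Require Import Reals Ensembles Finite_sets.
From Stdlib Require Import Finite_sets_facts List Lra Lia.
Open Scope R_scope.

Fixpoint tsize {d : nat} (t : tree d) : nat :=
  match t with
  | Node a b c => S (tsize a + tsize b + tsize c)
  | _ => 0%nat
  end.

Fixpoint fin_all (n : nat) : list (Fin.t n) :=
  match n with
  | O => nil
  | S m => Fin.F1 :: map Fin.FS (fin_all m)
  end.

Lemma fin_all_In n (i : Fin.t n) : List.In i (fin_all n).
Proof. induction i; simpl; [left; reflexivity | right; apply in_map; assumption]. Qed.

Fixpoint enum (d : nat) (k : nat) : list (tree d) :=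
  One :: Xi :: map X (fin_all d) ++
  match k with
  | O => nil
  | S k' => let l := enum d k' in
      flat_map (fun a => flat_map (fun b => map (fun c => Node a b c) l) l) l
  end.

Lemma enum_In d (t : tree d) : forall k, (tsize t <= k)%nat -> List.In t (enum d k).
Proof.
  induction t; intros k Hk; destruct k; simpl in *; try lia;
  try (left; reflexivity); try (right; left; reflexivity);
  try (right; right; apply in_or_app; left; apply in_map, fin_all_In).
  right; right; apply in_or_app; right.
  apply in_flat_map; exists t1; split; [apply IHt1; lia|].
  apply in_flat_map; exists t2; split; [apply IHt2; lia|].
  apply in_map; apply IHt3; lia.
Qed.

Lemma list_finite {U} (l : list U) : Finite U (fun x => List.In x l).
Proof.
  induction l as [|a l IH].
  - apply Finite_downward_closed with (A := Empty_set U); [constructor|].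
    intros x Hx; destruct Hx.
  - apply Finite_downward_closed with (A := Ensembles.Add U (fun x => List.In x l) a).
    + apply Add_preserves_Finite; exact IH.
    + intros x [H|H]; [subst; right; constructor | left; exact H].
Qed.

Lemma order_lb d delta e (he1 : e <= 1) (he2 : e <= delta) (t : tree d) :
  order delta t >= -3 + e * INR (2 * tsize t + 1).
Proof.
  induction t; simpl order; simpl tsize; try (change (INR (2*0+1)) with 1; lra).
  replace (2 * S (tsize t1 + tsize t2 + tsize t3) + 1)%nat with
    ((2 * tsize t1 + 1) + (2 * tsize t2 + 1) + (2 * tsize t3 + 1))%nat by lia.
  rewrite !plus_INR in *. nra.
Qed.

Theorem lemma3p3 (d : nat) (delta : R) (hd : (1 <= d)%nat) (hdelta : 0 < delta) :
  Finite (tree d) (W d delta) /\ Finite (tree d) (Nset d delta).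
Proof.
  set (e := Rmin 1 delta).
  assert (he1 : e <= 1) by apply Rmin_l.
  assert (he2 : e <= delta) by apply Rmin_r.
  assert (he0 : 0 < e) by (unfold e; apply Rmin_glb_lt; lra).
  destruct (INR_archimed e 3 he0) as [N HN].
  assert (Hkey : Included (tree d) (fun t => order delta t <= 0)
                   (fun t => List.In t (enum d N))).
  { intros t Ht. unfold Ensembles.In in Ht |- *. apply enum_In.
    pose proof (order_lb d delta e he1 he2 t) as H.
    assert (H2 : INR (2 * tsize t + 1) * e < INR N * e) by lra.
    apply Rmult_lt_reg_r in H2; [|lra].
    apply INR_lt in H2. lia. }
  split; eapply Finite_downward_closed; try apply list_finite;
    intros t Ht; apply Hkey; unfold Ensembles.In, W, Nset in *; lra.
Qed.
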